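(* Letting \begin{align*} \mathsf{D} & = \gamma_2 \mathsf{C_2^T W^{-1}}\bigl(\mathsf{I}_\ell-\bigl(\mathsf{I}_\ell+\gamma_1 \mathsf{C A^{-1} C^T W^{-1}}\bigr)^{-1}\bigr), \\ \mathsf{E} & = \mathsf{C_2 A_{22}^{-1}}, \\ \mathsf{G} & = \mathsf{I}_\ell - \gamma_1 \mathsf{C_2 A_{22}^{-1} C_2^T W^{-1}}, \\ \mathsf{F} & = \bigl(\mathsf{I}_\ell + \gamma_1 \mathsf{C A^{-1} C^T W^{-1}}\bigr)^{-1}, \end{align*} the right-preconditioned matrix can be written as: \begin{equation*} \mathcal{A}_{\gamma_1,\gamma_2} \widetilde{\mathcal{P}}_{\gamma_1,\gamma_2}^{-1} = \begin{bmatrix} \mathsf{I}_n & 0 & 0 \\ \mathsf{A_{21} A_{11}^{-1}} & \mathsf{I}_m-\mathsf{DE} & \mathsf{DG}\left(\frac{1}{\gamma_1}\mathsf{W}\right)\hat{\mathsf{S}}^{-1} \\ \mathsf{C A_{11}^{-1}} & -\mathsf{FE} & \left(\mathsf{I}_\ell-\mathsf{FG}\right) \left(-\frac{1}{\gamma_1}\mathsf{W}\right)\hat{\mathsf{S}}^{-1} \end{bmatrix}. \end{equation*}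
   Context: Let $\mathsf{A}\in\mathbb{R}^{n\times n}$ be symmetric positive definite, $\mathsf{A_2}\in\mathbb{R}^{m\times m}$ symmetric positive semidefinite with $\ker(\mathsf{A_2})=\operatorname{span}\{\mathsf{1}\}$, $\mathsf{C}\in\mathbb{R}^{\ell\times n}$ of full row rank, $\mathsf{C_2}\in\mathbb{R}^{\ell\times m}$ with $\mathsf{1}\notin\ker(\mathsf{C_2})$, $\mathsf{W}\in\mathbb{R}^{\ell\times\ell}$ symmetric positive definite, $\gamma_1,\gamma_2>0$, and $\hat{\mathsf{S}}\in\mathbb{R}^{\ell\times\ell}$ invertible. Define $\mathsf{A_{11}}=\mathsf{A}+\gamma_1\mathsf{C^TW^{-1}C}$, $\mathsf{A_{12}}=-\gamma_1\mathsf{C^TW^{-1}C_2}$, $\mathsf{A_{21}}=-\gamma_2\mathsf{C_2^TW^{-1}C}$, $\mathsf{A_{22}}=\mathsf{A_2}+\gamma_2\mathsf{C_2^TW^{-1}C_2}$ (so $\mathsf{A_{11}}$ and $\mathsf{A_{22}}$ are invertible), the augmented matrix $\mathcal{A}_{\gamma_1,\gamma_2}=\begin{bmatrix}\mathsf{A_{11}}&\mathsf{A_{12}}&\mathsf{C^T}\\ \mathsf{A_{21}}&\mathsf{A_{22}}&-\mathsf{C_2^T}\\ \mathsf{C}&-\mathsf{C_2}&0\end{bmatrix}$ and the modified augmented Lagrangian preconditioner $\widetilde{\mathcal{P}}_{\gamma_1,\gamma_2}=\begin{bmatrix}\mathsf{A_{11}}&\mathsf{A_{12}}&\mathsf{C^T}\\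 0&\mathsf{A_{22}}&-\mathsf{C_2^T}\\ 0&0&\hat{\mathsf{S}}\end{bmatrix}$. *)

(* Defs.v *)
From mathcomp Require Import all_boot all_order all_algebra.
Set Implicit Arguments. Unset Strict Implicit. Unset Printing Implicit Defensive.
Import Order.TTheory GRing.Theory Num.Theory.
Local Open Scope ring_scope.

Section Defs.
Variable R : realFieldType.

Definition spd (k : nat) (M : 'M[R]_k) : Prop :=
  M^T = M /\ forall x : 'cV[R]_k, x != 0 -> 0 < (x^T *m M *m x) 0 0.

Definition spsd (k : nat) (M : 'M[R]_k) : Prop :=
  M^T = M /\ forall x : 'cV[R]_k, 0 <= (x^T *m M *m x) 0 0.

Definition ones (k : nat) : 'cV[R]_k := const_mx 1.

Variables (n m l : nat) (A : 'M[R]_n) (A2 : 'M[R]_m) (C : 'M[R]_(l, n))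
  (C2 : 'M[R]_(l, m)) (W : 'M[R]_l) (g1 g2 : R) (Shat : 'M[R]_l).

Definition A11 : 'M[R]_n := A + g1 *: (C^T *m invmx W *m C).
Definition A12 : 'M[R]_(n, m) := - (g1 *: (C^T *m invmx W *m C2)).
Definition A21 : 'M[R]_(m, n) := - (g2 *: (C2^T *m invmx W *m C)).
Definition A22 : 'M[R]_m := A2 + g2 *: (C2^T *m invmx W *m C2).

Definition Aaug : 'M[R]_(n + m + l) :=
  block_mx (block_mx A11 A12 A21 A22) (col_mx C^T (- C2^T))
           (row_mx C (- C2)) 0.

Definition Ptilde : 'M[R]_(n + m + l) :=
  block_mx (block_mx A11 A12 0 A22) (col_mx C^T (- C2^T))
           0 Shat.

Definition Fmx : 'M[R]_l :=
  invmx (1%:M + g1 *: (C *m invmx A *m C^T *m invmx W)).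
Definition Dmx : 'M[R]_(m, l) :=
  g2 *: (C2^T *m invmx W *m (1%:M - Fmx)).
Definition Emx : 'M[R]_(l, m) := C2 *m invmx A22.
Definition Gmx : 'M[R]_l := 1%:M - g1 *: (C2 *m invmx A22 *m C2^T *m invmx W).

Definition RHSmx : 'M[R]_(n + m + l) :=
  block_mx
    (block_mx 1%:M 0 (A21 *m invmx A11) (1%:M - Dmx *m Emx))
    (col_mx 0 (Dmx *m Gmx *m (g1^-1 *: W) *m invmx Shat))
    (row_mx (C *m invmx A11) (- (Fmx *m Emx)))
    ((1%:M - Fmx *m Gmx) *m ((- g1^-1) *: W) *m invmx Shat).

End Defs.

(* Main.v *)
Require Import Defs.
From mathcomp Require Import all_boot all_order all_algebra.
From mathcomp Require Import ring lra.
Import Order.TTheory GRing.Theory Num.Theory.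
Set Implicit Arguments. Unset Strict Implicit. Unset Printing Implicit Defensive.
Local Open Scope ring_scope.

Section Inv.
Variable R : realFieldType.

Definition bf k (M : 'M[R]_k) (x y : 'cV[R]_k) : R := (x^T *m M *m y) 0 0.

Lemma bfDl k (M : 'M[R]_k) x y z : bf M (x + y) z = bf M x z + bf M y z.
Proof. by rewrite /bf raddfD /= !mulmxDl mxE. Qed.
Lemma bfDr k (M : 'M[R]_k) x y z : bf M z (x + y) = bf M z x + bf M z y.
Proof. by rewrite /bf mulmxDr mxE. Qed.
Lemma bfZl k (M : 'M[R]_k) a x y : bf M (a *: x) y = a * bf M x y.
Proof. by rewrite /bf linearZ /= -!scalemxAl mxE. Qed.
Lemma bfZr k (M : 'M[R]_k) a x y : bf M x (a *: y) = a * bf M x y.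
Proof. by rewrite /bf -!scalemxAr mxE. Qed.
Lemma bfMD k (M N : 'M[R]_k) x y : bf (M + N) x y = bf M x y + bf N x y.
Proof. by rewrite /bf mulmxDr mulmxDl mxE. Qed.
Lemma bfMZ k (M : 'M[R]_k) a x y : bf (a *: M) x y = a * bf M x y.
Proof. by rewrite /bf -scalemxAr -scalemxAl mxE. Qed.
Lemma bfconj k p (M : 'M[R]_k) (B : 'M[R]_(k, p)) x y :
  bf (B^T *m M *m B) x y = bf M (B *m x) (B *m y).
Proof. by rewrite /bf trmx_mul !mulmxA. Qed.
Lemma bfsym k (M : 'M[R]_k) x y : M^T = M -> bf M x y = bf M y x.
Proof.
move=> sM; have e (B : 'M[R]_1) : B 0 0 = B^T 0 0 by rewrite mxE.
by rewrite /bf e !trmx_mul sM trmxK mulmxA.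
Qed.

Lemma spd_pos k (M : 'M[R]_k) x : spd M -> x != 0 -> 0 < bf M x x.
Proof. by case=> _ H; apply: H. Qed.

Lemma spd_ge0 k (M : 'M[R]_k) x : spd M -> 0 <= bf M x x.
Proof.
move=> H; have [->|nz] := eqVneq x 0; last exact/ltW/spd_pos.
by rewrite /bf mulmx0 mxE.
Qed.

Lemma spd_eq0 k (M : 'M[R]_k) x : spd M -> bf M x x = 0 -> x = 0.
Proof.
move=> H e; apply/eqP; apply: contraT => nz.
by have := spd_pos H nz; rewrite e ltxx.
Qed.

Lemma nondeg_unit k (M : 'M[R]_k) : (forall x, bf M x x = 0 -> x = 0) -> M \in unitmx.
Proof.
move=> H; rewrite unitmxE unitfE; apply/negP => /det0P [v v0 vM].
have : bf M v^T v^T = 0 by rewrite /bf trmxK vM mul0mx mxE.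
by move/H/eqP; rewrite trmx_eq0 (negbTE v0).
Qed.

Lemma spd_unit k (M : 'M[R]_k) : spd M -> M \in unitmx.
Proof. by move=> H; apply: nondeg_unit => x; apply: spd_eq0. Qed.

Lemma spd_inv k (M : 'M[R]_k) : spd M -> spd (invmx M).
Proof.
move=> H; have uM := spd_unit H; case: (H) => sM pM; split.
  by rewrite trmx_inv sM.
move=> x nz; have := pM (invmx M *m x).
have -> : (invmx M *m x)^T *m M *m (invmx M *m x) = x^T *m invmx M *m x.
  by rewrite trmx_mul trmx_inv sM -!mulmxA (mulmxA M) mulmxV // mul1mx.
apply; apply: contra nz => /eqP e.
by rewrite -[x](mulKVmx uM) e mulmx0.
Qed.

Lemma spsd_ker k (M : 'M[R]_k) x : spsd M -> bf M x x = 0 -> M *m x = 0.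
Proof.
case=> sM pM e; apply/matrixP => i j; rewrite [j]ord1 [RHS]mxE.
set y : 'cV[R]_k := delta_mx i 0.
have hb : bf M y x = (M *m x) i 0.
  by rewrite /bf -mulmxA /y trmx_delta -rowE !mxE.
set b := bf M y x; set c := bf M y y.
have c0 : 0 <= c := pM y.
have h t : 0 <= 2 * t * b + t ^+ 2 * c.
  have := pM (x + t *: y); rewrite -/(bf M _ _) !bfDl !bfDr !bfZl !bfZr e.
  by rewrite (bfsym x y sM) -/b -/c => H; lra.
have := h (- b / (c + 1)).
have c1 : 0 < c + 1 by lra.
set t := - b / (c + 1) => ht.
have tc : t * (c + 1) = - b by rewrite /t mulfVK // lt0r_neq0.
rewrite -hb.
have : t = 0 by nra.
by move=> t0; move: tc; rewrite t0 mul0r => /eqP; rewrite eq_sym oppr_eq0 => /eqP.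
Qed.
End Inv.

Section Core.
Variables (R : realFieldType) (n m l : nat)
  (A : 'M[R]_n) (A2 : 'M[R]_m) (C : 'M[R]_(l, n)) (C2 : 'M[R]_(l, m))
  (W : 'M[R]_l) (g1 g2 : R) (Shat : 'M[R]_l).

Hypotheses (uA : A \in unitmx) (uW : W \in unitmx) (uS : Shat \in unitmx)
  (uA11 : A11 A C W g1 \in unitmx) (uA22 : A22 A2 C2 W g2 \in unitmx)
  (uQ : (1%:M + g1 *: (C *m invmx A *m C^T *m invmx W)) \in unitmx)
  (g1n0 : g1 != 0).

Let Ai := invmx A.
Let Wi := invmx W.
Let A11i := invmx (A11 A C W g1).
Let K := C *m Ai *m C^T *m Wi.
Let M := C *m A11i *m C^T *m Wi.
Let Q := 1%:M + g1 *: K.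

Lemma step1 : A11 A C W g1 *m Ai *m C^T = C^T *m (1%:M + g1 *: (Wi *m C *m Ai *m C^T)).
Proof.
rewrite /A11 mulmxDl mulmxDl mulmxV // mul1mx mulmxDr mulmx1.
by rewrite -!scalemxAl -!scalemxAr !mulmxA.
Qed.

Lemma step2 : Ai *m C^T = A11i *m C^T *m (1%:M + g1 *: (Wi *m C *m Ai *m C^T)).
Proof.
by rewrite -mulmxA -step1 /A11i !mulmxA mulVmx // mul1mx.
Qed.

Lemma step3 : K = M *m Q.
Proof.
rewrite /K /M /Q -(mulmxA C Ai) step2 !mulmxDr !mulmxDl !mulmx1.
by do ![rewrite -scalemxAr | rewrite -scalemxAl]; rewrite /K !mulmxA.
Qed.

Lemma key : g1 *: M = 1%:M - invmx Q.
Proof.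
have -> : g1 *: M = g1 *: K *m invmx Q.
  by rewrite step3 -scalemxAl mulmxK.
have -> : g1 *: K = Q - 1%:M by rewrite /Q addrAC subrr add0r.
by rewrite mulmxBl mulmxV // mul1mx.
Qed.



Let F := Fmx A C W g1.
Let D := Dmx A C C2 W g1 g2.
Let E := Emx A2 C2 W g2.
Let G := Gmx A2 C2 W g1 g2.

Lemma keyF : g1 *: (C *m A11i *m C^T *m Wi) = 1%:M - F.
Proof. exact: key. Qed.

Lemma hCW : C *m A11i *m C^T = (1%:M - F) *m (g1^-1 *: W).
Proof.
rewrite -keyF -scalemxAr -scalemxAl scalerA mulVf // scale1r.
by rewrite /Wi mulmxKV.
Qed.

Lemma hG k (X : 'M[R]_(k, l)) :
  X *m G *m (g1^-1 *: W) = X *m (g1^-1 *: W) - X *m E *m C2^T.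
Proof.
rewrite /G /Gmx mulmxBr mulmx1 mulmxBl; congr (_ - _).
do ![rewrite -scalemxAr | rewrite -scalemxAl]; rewrite scalerA mulVf // scale1r.
by rewrite !mulmxA mulmxKV.
Qed.

Lemma hX2 : A21 C C2 W g2 *m A11i *m C^T = - (D *m (g1^-1 *: W)).
Proof.
rewrite /A21 /D /Dmx !mulNmx; congr (- _).
by rewrite -!scalemxAl -(mulmxA (C2^T *m invmx W)) -hCW !mulmxA.
Qed.

Lemma zmodB (V : zmodType) (x y z : V) : (z - y) + x + -(z - (y - x)) = 0.
Proof. by apply/eqP; rewrite subr_eq0 opprB addrAC addrA. Qed.

Lemma hX1 : A21 C C2 W g2 *m A11i *m A12 C C2 W g1 = D *m C2.
Proof.
rewrite /A21 /A12 /D /Dmx -keyF !mulNmx !mulmxN opprK.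
do ![rewrite -scalemxAr | rewrite -scalemxAl]; rewrite !scalerA !mulmxA.
by rewrite mulrC.
Qed.

Lemma zmodA (V : zmodType) (a b c : V) : -a + -(c - b) + (a - b) = -c.
Proof. by rewrite opprB addrC addrA (addrAC a) subrr add0r addKr. Qed.

Lemma RP : RHSmx A A2 C C2 W g1 g2 Shat *m Ptilde A A2 C C2 W g1 g2 Shat
  = Aaug A A2 C C2 W g1 g2.
Proof.
rewrite /RHSmx /Ptilde /Aaug mulmx_block !mulmx0 !addr0 mulmx_block mul_block_col
  mul_col_mx add_col_mx mul_row_block mul_row_col !mulmxKV //.
rewrite ?mulmx0 ?mul0mx ?mul1mx ?addr0 ?add0r.
congr block_mx.
- congr block_mx.
  by rewrite mulmxBl mul1mx /Emx !mulmxA mulmxKV // hX1 addrC subrK.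
- congr col_mx.
  rewrite hX2 hG mulmxN mulmxBl mul1mx.
  exact: zmodA.
- congr row_mx.
  rewrite mulNmx /Emx !mulmxA mulmxKV //.
  rewrite /A12 mulmxN -scalemxAr !mulmxA scalemxAl keyF mulmxBl mul1mx.
  by rewrite opprB addrAC subrr add0r.
- rewrite hCW mulNmx mulmxN opprK scaleNr mulmxN !mulmxBl !mul1mx hG.
  exact: zmodB.
Qed.
End Core.

Section Units.
Variables (R : realFieldType) (n m l : nat)
  (A : 'M[R]_n) (A2 : 'M[R]_m) (C : 'M[R]_(l, n)) (C2 : 'M[R]_(l, m))
  (W : 'M[R]_l) (g1 g2 : R).

Lemma A11_unit : spd A -> spd W -> 0 < g1 -> A11 A C W g1 \in unitmx.
Proof.
move=> sA sW g1p; apply: nondeg_unit => x.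
rewrite /A11 bfMD bfMZ bfconj => e.
have h1 := spd_ge0 x sA; have h2 := spd_ge0 (C *m x) (spd_inv sW).
apply: (spd_eq0 sA); nra.
Qed.

Lemma Q_unit : spd A -> spd W -> 0 < g1 ->
  (1%:M + g1 *: (C *m invmx A *m C^T *m invmx W)) \in unitmx.
Proof.
move=> sA sW g1p; have uW := spd_unit sW.
have -> : 1%:M + g1 *: (C *m invmx A *m C^T *m invmx W)
    = (W + g1 *: (C *m invmx A *m C^T)) *m invmx W.
  by rewrite mulmxDl mulmxV // scalemxAl.
rewrite unitmx_mul unitmx_inv uW andbT; apply: nondeg_unit => y.
rewrite bfMD bfMZ -{1}(trmxK C) bfconj => e.
have h1 := spd_ge0 y sW; have h2 := spd_ge0 (C^T *m y) (spd_inv sA).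
apply: (spd_eq0 sW); nra.
Qed.

Lemma A22_unit : spsd A2 ->
  (forall x : 'cV[R]_m, A2 *m x = 0 <-> exists c : R, x = c *: ones R m) ->
  C2 *m ones R m != 0 -> spd W -> 0 < g2 -> A22 A2 C2 W g2 \in unitmx.
Proof.
move=> sA2 hker h1s sW g2p; apply: nondeg_unit => x.
rewrite /A22 bfMD bfMZ bfconj => e.
have h1 : 0 <= bf A2 x x by case: sA2 => _; apply.
have h2 := spd_ge0 (C2 *m x) (spd_inv sW).
have e1 : bf A2 x x = 0 by nra.
have e2 : bf (invmx W) (C2 *m x) (C2 *m x) = 0 by nra.
have C2x0 := spd_eq0 (spd_inv sW) e2.
have [c xc] := (hker x).1 (spsd_ker sA2 e1).
move: C2x0; rewrite xc -scalemxAr => /eqP; rewrite scalemx_eq0 (negbTE h1s) orbF.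
by move=> /eqP ->; rewrite scale0r.
Qed.
End Units.

Unset Implicit Arguments.
Set Strict Implicit.

Theorem mainTheorem7 (R : realFieldType) (n m l : nat)
  (A : 'M[R]_n) (A2 : 'M[R]_m) (C : 'M[R]_(l, n)) (C2 : 'M[R]_(l, m))
  (W : 'M[R]_l) (g1 g2 : R) (Shat : 'M[R]_l) :
  spd A ->
  spsd A2 ->
  (forall x : 'cV[R]_m, A2 *m x = 0 <-> exists c : R, x = c *: ones R m) ->
  \rank C = l ->
  C2 *m ones R m != 0 ->
  spd W ->
  0 < g1 -> 0 < g2 ->
  Shat \in unitmx ->
  Aaug A A2 C C2 W g1 g2 *m invmx (Ptilde A A2 C C2 W g1 g2 Shat)
  = RHSmx A A2 C C2 W g1 g2 Shat.
Proof.
move=> sA sA2 hker _ h1s sW g1p g2p uS.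
have uA := spd_unit sA; have uW := spd_unit sW.
have uA11 := A11_unit C sA sW g1p.
have uA22 := A22_unit sA2 hker h1s sW g2p.
have uQ := Q_unit C sA sW g1p.
have g1n0 : g1 != 0 by rewrite lt0r_neq0.
have uP : Ptilde A A2 C C2 W g1 g2 Shat \in unitmx.
  by rewrite unitmxE /Ptilde !det_ublock !unitrM -!unitmxE uA11 uA22 uS.
by rewrite -(RP uA uW uS uA11 uA22 uQ g1n0) mulmxK.
Qed.
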